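(* Let $G$ be a $3$-free digraph. Let $S$ be the number of ordered $4$-tuples $(a,b,c,d)$ of distinct vertices such that the subgraph induced on $\{a,b,c,d\}$ is a directed cycle of length $4$, and let $N$ be the set of all $4$-tuples $(p,q,r,s)\in V(G)^4$ (repetitions allowed) for which there is no directed path in $G$ with exactly four vertices whose vertex set is $\{p,q,r,s\}$. Then $|N| \geq \frac{2}{3}S$.
   Context: Digraphs are finite, loopless, with at most one edge $uv$ per ordered pair. A digraph is $3$-free if it has no directed cycle of length at most $3$. A directed path with four vertices is a sequence $v_1,v_2,v_3,v_4$ of distinct vertices with $v_iv_{i+1}\in E(G)$ for $i=1,2,3$. *)

(* Defs.v *)
(* A digraph on a finite vertex type T is a relation e : rel T
   (at most one edge per ordered pair is automatic); looplessness is
   irreflexivity. *)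
From mathcomp Require Import all_boot.
Set Implicit Arguments. Unset Strict Implicit. Unset Printing Implicit Defensive.

Section Digraphs.
Variable T : finType.
Variable e : rel T.

Definition loopless : Prop := irreflexive e.

(* 3-free: no directed cycle of length at most 3
   (length 1 = loop, length 2 = u->v->u, length 3 = u->v->w->u). *)
Definition three_free : Prop :=
  [/\ forall u, ~~ e u u,
      forall u v, u != v -> ~~ (e u v && e v u) &
      forall u v w, uniq [:: u; v; w] -> ~~ [&& e u v, e v w & e w u]].

Definition induced_dicycle4 (A : {set T}) : bool :=
  [exists w0, exists w1, exists w2, exists w3,
    [&& uniq [:: w0; w1; w2; w3], A == [set w0; w1; w2; w3] &
      [forall x in A, forall y in A,
        e x y == [|| (x == w0) && (y == w1), (x == w1) && (y == w2),
                     (x == w2) && (y == w3) | (x == w3) && (y == w0)]]]].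

Definition has_path4_on (A : {set T}) : bool :=
  [exists v1, exists v2, exists v3, exists v4,
    [&& uniq [:: v1; v2; v3; v4], e v1 v2, e v2 v3, e v3 v4 &
        A == [set v1; v2; v3; v4]]].

Definition vset4 (t : T * T * T * T) : {set T} :=
  let: (a, b, c, d) := t in [set a; b; c; d].

Definition distinct4 (t : T * T * T * T) : bool :=
  let: (a, b, c, d) := t in uniq [:: a; b; c; d].

Definition S_count : nat :=
  #|[set t : T * T * T * T | distinct4 t && induced_dicycle4 (vset4 t)]|.

Definition N_set : {set T * T * T * T} :=
  [set t : T * T * T * T | ~~ has_path4_on (vset4 t)].

End Digraphs.

(* Main.v *)
Require Import Defs.
From mathcomp Require Import all_boot all_order all_algebra.
From mathcomp Require Import ring lra zify.
Set Implicit Arguments. Unset Strict Implicit. Unset Printing Implicit Defensive.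
Import Order.TTheory GRing.Theory Num.Theory.


Lemma card4 (T : finType) (P : pred (T * T * T * T)) :
  #|[set t | P t]| = \sum_a \sum_b \sum_c \sum_d (P (a, b, c, d) : nat).
Proof.
rewrite -sum1_card big_mkcond /=.
rewrite pair_bigA /= pair_bigA /= pair_bigA /=.
apply: eq_bigr => -[[[a b] c] d] _ /=.
by rewrite inE; case: (P _).
Qed.


Definition M (T : finType) (e : rel T) (x z : T) : {set T} := [set y | e x y && e y z].

Lemma M_noedge (T : finType) (e : rel T) (H3 : three_free e) a c x y :
  x \in M e a c -> y \in M e c a -> ~~ e x y.
Proof.
case: H3 => Hl H2 Ht; rewrite !inE => /andP[ax xc] /andP[cy ya].
apply/negP => xy.
have ne1 : a != x by apply: contraTneq ax => ->; rewrite (negbTE (Hl x)).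
have ne2 : a != y by apply: contraTneq ya => ->; rewrite (negbTE (Hl y)).
have ne3 : x != y by apply: contraTneq xy => ->; rewrite (negbTE (Hl y)).
have U : uniq [:: a; x; y] by rewrite /= !inE !negb_or ne1 ne2 ne3.
by have := Ht _ _ _ U; rewrite ax xy ya.
Qed.

Lemma M_disj (T : finType) (e : rel T) (H3 : three_free e) a c y :
  y \in M e a c -> y \notin M e c a.
Proof.
case: H3 => Hl H2 Ht; rewrite !inE => /andP[ay yc]; apply/negP => /andP[cy ya].
have ne : y != c by apply: contraTneq yc => ->; rewrite (negbTE (Hl c)).
by have := H2 _ _ ne; rewrite yc cy.
Qed.

Lemma N_mem (T : finType) (e : rel T) (H3 : three_free e) a c b d u v :
  b \in M e a c -> d \in M e c a ->
  u \in M e a c :|: M e c a -> v \in M e a c :|: M e c a ->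
  (b, d, u, v) \in N_set e.
Proof.
move=> Hb Hd Hu Hv; rewrite inE /=.
apply/negP => /existsP[v1 /existsP[v2 /existsP[v3 /existsP[v4
  /and5P[_ e12 e23 e34 /eqP Hs]]]]].
set U := M e a c :|: M e c a.
have sub : forall x, x \in [set v1; v2; v3; v4] -> x \in U.
  move=> x; rewrite -Hs => Hx; move: Hx; rewrite !inE.
  rewrite -!orbA; case/or4P => /eqP ->; rewrite /U ?inE //.
  - by move: Hb; rewrite inE => ->.
  - by move: Hd; rewrite inE => ->; rewrite orbT.
  - by move: Hu; rewrite !inE.
  - by move: Hv; rewrite !inE.
have side : forall x y, x \in U -> y \in U -> e x y ->
    (x \in M e a c) = (y \in M e a c).
  move=> x y; rewrite /U !in_setU => /orP[] Hx /orP[] Hy exy.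
  - by rewrite Hx Hy.
  - by move: (M_noedge H3 Hx Hy); rewrite exy.
  - by move: (M_noedge H3 Hx Hy); rewrite exy.
  - by rewrite (negbTE (M_disj H3 Hx)) (negbTE (M_disj H3 Hy)).
have U1 : v1 \in U by apply: sub; rewrite !inE eqxx.
have U2 : v2 \in U by apply: sub; rewrite !inE eqxx !orbT.
have U3 : v3 \in U by apply: sub; rewrite !inE eqxx !orbT.
have U4 : v4 \in U by apply: sub; rewrite !inE eqxx !orbT.
have s12 := side _ _ U1 U2 e12.
have s23 := side _ _ U2 U3 e23.
have s34 := side _ _ U3 U4 e34.
have allside : forall x, x \in [set v1; v2; v3; v4] -> (x \in M e a c) = (v1 \in M e a c).
  move=> x Hx; move: Hx s12 s23 s34; rewrite !inE -!orbA.
  by case/or4P => /eqP -> s12 s23 s34; rewrite -?s34 -?s23 -?s12.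
have Hb' : (b \in M e a c) = (v1 \in M e a c) by apply: allside; rewrite -Hs !inE eqxx.
have Hd' : (d \in M e a c) = (v1 \in M e a c) by apply: allside; rewrite -Hs !inE eqxx ?orbT.
have Hdd : d \in M e a c by rewrite Hd' -Hb'.
by move: (M_disj H3 Hdd); rewrite Hd.
Qed.


Lemma sum_ind (T : finType) (A : {set T}) : \sum_x ((x \in A) : nat) = #|A|.
Proof. by rewrite -sum1_card [RHS]big_mkcond /=; apply: eq_bigr => x _; case: (x \in A). Qed.

Lemma F1 (T : finType) (e : rel T) (H3 : three_free e) a b c d :
  e a b -> e b c -> e c d -> e d a ->
  4 * (#|M e a c| * #|M e c a|) <= \sum_u \sum_v ((b, d, u, v) \in N_set e : nat).
Proof.
move=> ab bc cd da.
have Hb : b \in M e a c by rewrite inE ab bc.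
have Hd : d \in M e c a by rewrite inE cd da.
set U := M e a c :|: M e c a.
have cU : #|U| = #|M e a c| + #|M e c a|.
  rewrite /U cardsU.
  have -> : M e a c :&: M e c a = set0.
    apply/setP => x; rewrite inE in_set0; apply/negP => /andP [h1 h2].
    by rewrite (negbTE (M_disj H3 h1)) in h2.
  by rewrite cards0 subn0.
apply: (@leq_trans (#|U| * #|U|)); first by rewrite cU mulnn; exact: (nat_AGM2 _ _).1.
rewrite -[X in X * _]sum_ind big_distrl /=.
apply: leq_sum => u _; rewrite -sum_ind big_distrr /=.
apply: leq_sum => v _.
case Hu: (u \in U); case Hv: (v \in U) => //=.
by rewrite (N_mem H3 Hb Hd Hu Hv).
Qed.

Local Open Scope ring_scope.
Lemma key (f1 f2 p q : rat) : 0 < p -> 0 < q -> 4 * q <= f1 -> 4 * p <= f2 ->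
  8 <= f1 / p + f2 / q.
Proof.
move=> hp hq h1 h2.
have hpq : 0 < p * q by rewrite mulr_gt0.
have E : f1 / p + f2 / q - 8 = (f1 * q + f2 * p - 8 * p * q) / (p * q).
  by field; rewrite ?gt_eqF.
rewrite -subr_ge0 E; apply: divr_ge0; last exact: ltW.
have a1 : 0 <= (f1 - 4 * q) * q by apply: mulr_ge0; [rewrite subr_ge0 | apply: ltW].
have a2 : 0 <= (f2 - 4 * p) * p by apply: mulr_ge0; [rewrite subr_ge0 | apply: ltW].
have a3 : 0 <= (p - q) * (p - q) by rewrite -expr2 sqr_ge0.
have -> : f1 * q + f2 * p - 8 * p * q = (f1 - 4 * q) * q + (f2 - 4 * p) * p + 4 * ((p - q) * (p - q)) by ring.
by apply: addr_ge0; [apply: addr_ge0 | apply: mulr_ge0].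
Qed.

Local Close Scope ring_scope.

Definition q (T : finType) (e : rel T) a b c d : nat := [&& e a b, e b c, e c d & e d a].
Definition g (T : finType) (e : rel T) x z : nat := #|M e x z| * #|M e z x|.
Definition f (T : finType) (e : rel T) x z : nat :=
  \sum_u \sum_v ((x, z, u, v) \in N_set e : nat).
Definition Fr (T : finType) (e : rel T) x z : rat := ((f e x z)%:R / (g e x z)%:R)%R.

Lemma cardN4 (T : finType) (A : {set T * T * T * T}) :
  #|A| = \sum_a \sum_b \sum_c \sum_d ((a, b, c, d) \in A : nat).
Proof.
rewrite -sum1_card big_mkcond /=.
rewrite pair_bigA /= pair_bigA /= pair_bigA /=.
apply: eq_bigr => -[[[a b] c] d] _ /=.
by case: (_ \in A).
Qed.

Lemma sum_q (T : finType) (e : rel T) a c :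
  \sum_b \sum_d q e a b c d = g e a c.
Proof.
rewrite /g -sum_ind big_distrl /=; apply: eq_bigr => b _.
rewrite -sum_ind big_distrr /=; apply: eq_bigr => d _.
by rewrite /q !inE; case: (e a b); case: (e b c); case: (e c d); case: (e d a).
Qed.

Lemma sumA_le (T : finType) (e : rel T) :
  (\sum_a \sum_b \sum_c \sum_d ((q e a b c d)%:R * Fr e a c) <= (#|N_set e|)%:R :> rat)%R.
Proof.
rewrite cardN4 natr_sum; apply: ler_sum => a _.
rewrite exchange_big natr_sum; apply: ler_sum => c _.
have -> : (\sum_b \sum_d ((q e a b c d)%:R * Fr e a c) = (g e a c)%:R * Fr e a c :> rat)%R.
  rewrite -sum_q natr_sum mulr_suml; apply: eq_bigr => b _.
  by rewrite natr_sum mulr_suml.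
rewrite /Fr -/(f e a c).
have [->|gn0] := eqVneq (g e a c) 0%N.
  by rewrite mul0r ler0n.
by rewrite mulrC divfK ?pnatr_eq0 // -natr_sum.
Qed.


Lemma q_rot (T : finType) (e : rel T) a b c d : q e a b c d = q e b c d a.
Proof. by rewrite /q; case: (e a b); case: (e b c); case: (e c d); case: (e d a). Qed.

Lemma sumB_eq (T : finType) (e : rel T) :
  (\sum_a \sum_b \sum_c \sum_d ((q e a b c d)%:R * Fr e b d)
   = \sum_a \sum_b \sum_c \sum_d ((q e a b c d)%:R * Fr e a c) :> rat)%R.
Proof.
rewrite exchange_big; apply: eq_bigr => b _.
rewrite exchange_big; apply: eq_bigr => c _.
rewrite exchange_big; apply: eq_bigr => d _.
apply: eq_bigr => a _.
by rewrite q_rot.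
Qed.

Lemma pointwise (T : finType) (e : rel T) (H3 : three_free e) a b c d :
  (8 * (q e a b c d)%:R <= (q e a b c d)%:R * (Fr e a c + Fr e b d) :> rat)%R.
Proof.
rewrite /q; case: (boolP [&& _, _, _ & _]) => [/and4P[ab bc cd da]|_]; last first.
  by rewrite mulr0 mul0r.
rewrite mulr1 mul1r /Fr.
have h1 := F1 H3 ab bc cd da.
have h2 := F1 H3 da ab bc cd.
have gac : (0 < g e a c)%N.
  rewrite /g muln_gt0; apply/andP; split; apply/card_gt0P.
  - by exists b; rewrite inE ab bc.
  - by exists d; rewrite inE cd da.
have gbd : (0 < g e b d)%N.
  rewrite /g muln_gt0; apply/andP; split; apply/card_gt0P.
  - by exists c; rewrite inE bc cd.
  - by exists a; rewrite inE da ab.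
have n4 : forall k : nat, (4 * k%:R = ((4 * k)%N)%:R :> rat)%R by move=> k; rewrite natrM.
apply: key; rewrite ?ltr0n // n4 ler_nat.
- by rewrite /g [(#|M e b d| * _)%N]mulnC.
- by [].
Qed.


Lemma Q_le (T : finType) (e : rel T) (H3 : three_free e) :
  (4 * \sum_a \sum_b \sum_c \sum_d q e a b c d <= #|N_set e|)%N.
Proof.
rewrite -(ler_nat rat).
have hA := sumA_le e; have hB := sumB_eq e.
set Qs := (\sum_a \sum_b \sum_c \sum_d q e a b c d)%N.
set SA := (\sum_a \sum_b \sum_c \sum_d ((q e a b c d)%:R * Fr e a c))%R in hA hB.
have hP : (8 * Qs%:R <= SA + SA :> rat)%R.
  rewrite -{2}hB /SA -big_split /= /Qs natr_sum mulr_sumr; apply: ler_sum => a _.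
  rewrite -big_split natr_sum mulr_sumr; apply: ler_sum => b _.
  rewrite -big_split natr_sum mulr_sumr; apply: ler_sum => c _.
  rewrite -big_split natr_sum mulr_sumr; apply: ler_sum => d _.
  by have := pointwise H3 a b c d; rewrite mulrDr.
rewrite natrM.
lra.
Qed.


Lemma S_point (T : finType) (e : rel T) a b c d :
  distinct4 (a, b, c, d) && induced_dicycle4 e (vset4 (a, b, c, d)) ->
  (0 < q e a b c d + q e a b d c + q e a c b d + q e a c d b + q e a d b c + q e a d c b)%N.
Proof.
case/andP => Hu /existsP[w0 /existsP[w1 /existsP[w2 /existsP[w3 /and3P[Hw /eqP Hs Hf]]]]].
rewrite /vset4 in Hs Hf.
set W := [set w0; w1; w2; w3] in Hs Hf.
have H : forall x y, x \in W -> y \in W -> e x y =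
   [|| (x == w0) && (y == w1), (x == w1) && (y == w2),
       (x == w2) && (y == w3) | (x == w3) && (y == w0)].
  move=> x y hx hy; rewrite -Hs in hx hy.
  by move/forall_inP: Hf => /(_ x hx) /forall_inP /(_ y hy) /eqP.
have m0 : w0 \in W by rewrite !inE eqxx.
have m1 : w1 \in W by rewrite !inE eqxx ?orbT.
have m2 : w2 \in W by rewrite !inE eqxx ?orbT.
have m3 : w3 \in W by rewrite !inE eqxx ?orbT.
move: Hw; rewrite /= !inE !negb_or => /andP[/and3P[n01 n02 n03] /andP[/andP[n12 n13] /andP[n23 _]]].
have n10 : w1 != w0 by rewrite eq_sym.
have n20 : w2 != w0 by rewrite eq_sym.
have n30 : w3 != w0 by rewrite eq_sym.
have n21 : w2 != w1 by rewrite eq_sym.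
have n31 : w3 != w1 by rewrite eq_sym.
have n32 : w3 != w2 by rewrite eq_sym.
have Hm : forall x, x \in [set a; b; c; d] -> x \in W by move=> x; rewrite Hs.
have ma : a \in W by apply: Hm; rewrite !inE eqxx.
have mb : b \in W by apply: Hm; rewrite !inE eqxx ?orbT.
have mc : c \in W by apply: Hm; rewrite !inE eqxx ?orbT.
have md : d \in W by apply: Hm; rewrite !inE eqxx ?orbT.
have e00 := H _ _ m0 m0. have e01 := H _ _ m0 m1. have e02 := H _ _ m0 m2. have e03 := H _ _ m0 m3.
have e10 := H _ _ m1 m0. have e11 := H _ _ m1 m1. have e12 := H _ _ m1 m2. have e13 := H _ _ m1 m3.
have e20 := H _ _ m2 m0. have e21 := H _ _ m2 m1. have e22 := H _ _ m2 m2. have e23 := H _ _ m2 m3.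
have e30 := H _ _ m3 m0. have e31 := H _ _ m3 m1. have e32 := H _ _ m3 m2. have e33 := H _ _ m3 m3.
rewrite !eqxx ?(negbTE n01, negbTE n02, negbTE n03, negbTE n10, negbTE n12, negbTE n13,
  negbTE n20, negbTE n21, negbTE n23, negbTE n30, negbTE n31, negbTE n32) /= in
  e00 e01 e02 e03 e10 e11 e12 e13 e20 e21 e22 e23 e30 e31 e32 e33.
move: Hu; rewrite /= !inE !negb_or => /andP[/and3P[nab nac nad] /andP[/andP[nbc nbd] /andP[ncd _]]].
move: ma mb nab mc nac nbc md nad nbd ncd; rewrite /W !inE -!orbA.
case/or4P => /eqP ->; case/or4P => /eqP ->; rewrite ?eqxx // => _;
case/or4P => /eqP ->; rewrite ?eqxx // => _ _;
case/or4P => /eqP ->; rewrite ?eqxx // => _ _ _;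
rewrite /q ?(e00, e01, e02, e03, e10, e11, e12, e13, e20, e21, e22, e23, e30, e31, e32, e33) //=.
Qed.



Lemma r1 (T : finType) (G : T -> T -> T -> nat) :
  \sum_b \sum_c \sum_d G b d c = \sum_b \sum_c \sum_d G b c d.
Proof. by apply: eq_bigr => b _; rewrite exchange_big. Qed.
Lemma r2 (T : finType) (G : T -> T -> T -> nat) :
  \sum_b \sum_c \sum_d G c b d = \sum_b \sum_c \sum_d G b c d.
Proof. by rewrite exchange_big. Qed.
Lemma r3 (T : finType) (G : T -> T -> T -> nat) :
  \sum_b \sum_c \sum_d G c d b = \sum_b \sum_c \sum_d G b c d.
Proof.
rewrite exchange_big; apply: eq_bigr => c _; by rewrite exchange_big.
Qed.
Lemma r4 (T : finType) (G : T -> T -> T -> nat) :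
  \sum_b \sum_c \sum_d G d b c = \sum_b \sum_c \sum_d G b c d.
Proof.
rewrite (eq_bigr (fun b => \sum_d \sum_c G d b c)); last by move=> b _; rewrite exchange_big.
by rewrite exchange_big.
Qed.
Lemma r5 (T : finType) (G : T -> T -> T -> nat) :
  \sum_b \sum_c \sum_d G d c b = \sum_b \sum_c \sum_d G b c d.
Proof.
rewrite (eq_bigr (fun b => \sum_d \sum_c G d c b)); last by move=> b _; rewrite exchange_big.
rewrite exchange_big; apply: eq_bigr => d _; by rewrite exchange_big.
Qed.

Lemma S_le (T : finType) (e : rel T) :
  (S_count e <= 6 * \sum_a \sum_b \sum_c \sum_d q e a b c d)%N.
Proof.
rewrite /S_count card4.
apply: (@leq_trans (\sum_a \sum_b \sum_c \sum_d
  (q e a b c d + q e a b d c + q e a c b d + q e a c d b + q e a d b c + q e a d c b))).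
  apply: leq_sum => a _; apply: leq_sum => b _; apply: leq_sum => c _; apply: leq_sum => d _.
  by case Hp: (_ && _) => //; apply: S_point.
rewrite big_distrr /=; apply: eq_leq; apply: eq_bigr => a _.
under eq_bigr => b _ do under eq_bigr => c _ do rewrite !big_split /=.
under eq_bigr => b _ do rewrite !big_split /=.
rewrite !big_split /=.
rewrite (r1 (q e a)) (r2 (q e a)) (r3 (q e a)) (r4 (q e a)) (r5 (q e a)).
by rewrite !mulSn mul0n addn0 !addnA.
Qed.

Theorem mainTheorem17 (T : finType) (e : rel T)
    (Hloop : loopless e) (H3 : three_free e) :
  2 * S_count e <= 3 * #|N_set e|.
Proof.
have h1 := S_le e; have h2 := Q_le H3.
set Qs := (\sum_a \sum_b \sum_c \sum_d q e a b c d)%N in h1 h2.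
lia.
Qed.
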